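(* Let $\mathbf{S}\in\mathbb{R}^{N\times N}$ be a spatial graph shift operator and $\mathbf{S}_T\in\mathbb{R}^{T\times T}$ a temporal graph shift operator. For a matrix $\mathbf{X}\in\mathbb{R}^{N\times T}$ let $\mathbf{x}_\diamond=\mathrm{vec}(\mathbf{X})\in\mathbb{R}^{NT}$. Let $\Phi(\,\cdot\,;\mathcal{H}(\mathbf{S}_T,\mathbf{S}))$ be a graph-time convolutional neural network (defined in the context) built with filters $\mathbf{H}^{fg}_\ell(\mathbf{S},\mathbf{S}_T)=\sum_{k=0}^{\bar K}\sum_{l=0}^{\tilde K}h^{fg}_{kl\ell}(\mathbf{S}_T^{\,l}\otimes\mathbf{S}^k)$ and a pointwise nonlinearity $\sigma$. Then for every permutation matrix $\mathbf{P}$ in $$\mathcal{P}=\{\mathbf{P}\in\{0,1\}^{N\times N}:\ \mathbf{P}\mathbf{1}=\mathbf{1},\ \mathbf{P}^\top\mathbf{1}=\mathbf{1}\}$$ it holds that $$\mathbf{P}^\top\,\mathrm{vec}^{-1}\!\big(\Phi(\mathrm{vec}(\mathbf{X});\mathcal{H}(\mathbf{S}_T,\mathbf{S}))\big)=\mathrm{vec}^{-1}\!\big(\Phi(\mathrm{vec}(\mathbf{P}^\top\mathbf{X});\mathcal{H}(\mathbf{S}_T,\mathbf{P}^\top\mathbf{S}\mathbf{P}))\big).$$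
   Context: $\mathrm{vec}$ stacks the columns of an $N\times T$ matrix into a vector of length $NT$ (entry $(i,t)$ goes to position $N(t-1)+i$), and $\mathrm{vec}^{-1}$ is its inverse. $\otimes$ is the Kronecker product. Graph-time convolutional neural network (GTCNN): fix $L\ge1$ layers and feature counts $F_0=1$, $F_1=\dots=F_{L-1}=F$, $F_L=1$. Set $\mathbf{x}^1_{\diamond,0}=\mathbf{x}_\diamond$. For $\ell=1,\dots,L$ and $f=1,\dots,F_\ell$, $$\mathbf{x}^f_{\diamond,\ell}=\sigma\Big(\sum_{g=1}^{F_{\ell-1}}\mathbf{H}^{fg}_\ell(\mathbf{S},\mathbf{S}_T)\,\mathbf{x}^g_{\diamond,\ell-1}\Big),$$ where $\sigma:\mathbb{R}\to\mathbb{R}$ is applied entrywise and $\mathbf{H}^{fg}_\ell(\mathbf{S},\mathbf{S}_T)=\sum_{k=0}^{\bar K}\sum_{l=0}^{\tilde K}h^{fg}_{kl\ell}(\mathbf{S}_T^{\,l}\otimes\mathbf{S}^k)$ with fixed scalar coefficients. The filter tensor is $\mathcal{H}(\mathbf{S}_T,\mathbf{S})=\{\mathbf{H}^{fg}_\ell(\mathbf{S},\mathbf{S}_T)\}_{\ell fg}$ and the GTCNN output is $\Phi(\mathbf{x}_\diamond;\mathcal{H}(\mathbf{S}_T,\mathbf{S}))=\mathbf{x}^1_{\diamond,L}\in\mathbb{R}^{NT}$. $\mathcal{H}(\mathbf{S}_T,\mathbf{P}^\top\mathbf{S}\mathbf{P})$ denotes the same filter tensor (same coefficients) with $\mathbf{S}$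 replaced by $\mathbf{P}^\top\mathbf{S}\mathbf{P}$. *)

(* Defs.v *)
From mathcomp Require Import all_boot all_order all_algebra.
From mathcomp Require Import reals.
Set Implicit Arguments. Unset Strict Implicit. Unset Printing Implicit Defensive.
Import Order.TTheory GRing.Theory Num.Theory.
Local Open Scope ring_scope.

Section Defs.
Variable R : realType.

Lemma divn_ord_lt m n (r : 'I_(m * n)) : (r %/ n < m)%N.
Proof.
move: (nat_of_ord r) (ltn_ord r) => k; clear r.
case: n => [|n]; first by rewrite muln0.
by move=> H; rewrite ltn_divLR.
Qed.
Lemma modn_ord_lt m n (r : 'I_(m * n)) : (r %% n < n)%N.
Proof.
move: (nat_of_ord r) (ltn_ord r) => k; clear r.
case: n => [|n]; first by rewrite muln0.
by move=> _; rewrite ltn_mod.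
Qed.
Definition ord_hi m n (r : 'I_(m * n)) : 'I_m := Ordinal (divn_ord_lt r).
Definition ord_lo m n (r : 'I_(m * n)) : 'I_n := Ordinal (modn_ord_lt r).

Lemma pair_ord_lt m n (a : 'I_m) (b : 'I_n) : (a * n + b < m * n)%N.
Proof.
have ha := ltn_ord a; have hb := ltn_ord b.
apply: (@leq_trans (a * n + n)); first by rewrite ltn_add2l.
by rewrite -[X in (_ + X <= _)%N]mul1n -mulnDl addn1 leq_mul2r ha orbT.
Qed.
Definition ord_pair m n (a : 'I_m) (b : 'I_n) : 'I_(m * n) :=
  Ordinal (pair_ord_lt a b).

(* Kronecker product A ⊗ B, with A : m1 x n1, B : m2 x n2:
   (A ⊗ B)[(a,b),(c,d)] = A[a,c] * B[b,d], row (a,b) at position a*m2+b. *)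
Definition kron m1 n1 m2 n2 (A : 'M[R]_(m1, n1)) (B : 'M[R]_(m2, n2))
  : 'M[R]_(m1 * m2, n1 * n2) :=
  \matrix_(r, c) (A (ord_hi r) (ord_hi c) * B (ord_lo r) (ord_lo c)).

(* vec: column stacking of an N x T matrix; entry (i,t) (0-based) goes to
   position N*t + i (0-based), i.e. N(t-1)+i in 1-based indexing. *)
Definition vec N T (X : 'M[R]_(N, T)) : 'cV[R]_(T * N) :=
  \col_k X (ord_lo k) (ord_hi k).
Definition unvec N T (v : 'cV[R]_(T * N)) : 'M[R]_(N, T) :=
  \matrix_(i, t) v (ord_pair t i) 0.

Definition gt_filter N T (Kb Kt : nat) (h : nat -> nat -> R)
  (S : 'M[R]_N) (ST : 'M[R]_T) : 'M[R]_(T * N) :=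
  \sum_(k < Kb.+1) \sum_(l < Kt.+1) h k l *: kron (ST ^+ l) (S ^+ k).

Definition feat (L F ell : nat) : nat :=
  if (ell == 0)%N || (ell == L) then 1%N else F.

(* GTCNN. Coefficients h ell f g k l = h^{fg}_{k l ell}; features f, g are
   indexed from 1 as in the paper. x ell f = x^f_{⋄,ell}. *)
Fixpoint gtcnn_layer N T (L F Kb Kt : nat)
  (h : nat -> nat -> nat -> nat -> nat -> R) (sigma : R -> R)
  (S : 'M[R]_N) (ST : 'M[R]_T) (x0 : 'cV[R]_(T * N)) (ell : nat)
  : nat -> 'cV[R]_(T * N) :=
  match ell with
  | 0 => fun _ => x0
  | ell'.+1 => fun f =>
      map_mx sigma
        (\sum_(g < feat L F ell')
            gt_filter Kb Kt (h ell'.+1 f g.+1) S ST *m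
            gtcnn_layer L F Kb Kt h sigma S ST x0 ell' g.+1)
  end.

Definition gtcnn N T (L F Kb Kt : nat)
  (h : nat -> nat -> nat -> nat -> nat -> R) (sigma : R -> R)
  (S : 'M[R]_N) (ST : 'M[R]_T) (x : 'cV[R]_(T * N)) : 'cV[R]_(T * N) :=
  gtcnn_layer L F Kb Kt h sigma S ST x L 1%N.

Definition perm_matrix N (P : 'M[R]_N) : Prop :=
  (forall i j, P i j = 0 \/ P i j = 1) /\
  P *m const_mx 1 = const_mx 1 :> 'cV[R]_N /\
  P^T *m const_mx 1 = const_mx 1 :> 'cV[R]_N.

End Defs.

(* Main.v *)
Require Import Defs.
From mathcomp Require Import all_boot all_order all_algebra.
From mathcomp Require Import reals.
Local Open Scope ring_scope.
Import Order.TTheory GRing.Theory Num.Theory.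

Section Aux.
Variable R : realType.

Lemma hi_pair m n (a : 'I_m) (b : 'I_n) : ord_hi (ord_pair a b) = a.
Proof.
apply: val_inj => /=.
have hb := ltn_ord b.
by rewrite divnMDl ?(leq_ltn_trans _ hb) // divn_small // addn0.
Qed.

Lemma lo_pair m n (a : 'I_m) (b : 'I_n) : ord_lo (ord_pair a b) = b.
Proof.
by apply: val_inj => /=; rewrite modnMDl modn_small.
Qed.

Lemma pair_hilo m n (r : 'I_(m * n)) : ord_pair (ord_hi r) (ord_lo r) = r.
Proof. by apply: val_inj => /=; rewrite -divn_eq. Qed.

Lemma big_pair m n (F : 'I_(m * n) -> R) :
  \sum_c F c = \sum_(a < m) \sum_(b < n) F (ord_pair a b).
Proof.
rewrite pair_big /=.
rewrite (reindex (fun ab : 'I_m * 'I_n => ord_pair ab.1 ab.2)) //=.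
apply: onW_bij.
exists (fun r => (ord_hi r, ord_lo r)).
  by case=> a b /=; rewrite hi_pair lo_pair.
by move=> r /=; rewrite pair_hilo.
Qed.

Lemma unvec_vec N T (X : 'M[R]_(N, T)) : unvec (vec X) = X.
Proof. by apply/matrixP => i t; rewrite !mxE hi_pair lo_pair. Qed.

Lemma vec_unvec N T (v : 'cV[R]_(T * N)) : vec (unvec v) = v.
Proof.
apply/matrixP => r j; rewrite !mxE pair_hilo.
by rewrite (ord1 j).
Qed.

Lemma unvec_sum N T (I : finType) (v : I -> 'cV[R]_(T * N)) :
  unvec (\sum_i v i) = \sum_i unvec (v i).
Proof. by apply/matrixP => i t; rewrite !mxE !summxE; apply: eq_bigr => k _; rewrite mxE. Qed.

Lemma unvecZ N T a (v : 'cV[R]_(T * N)) : unvec (a *: v) = a *: unvec v.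
Proof. by apply/matrixP => i t; rewrite !mxE. Qed.

Lemma unvec_map N T (f : R -> R) (v : 'cV[R]_(T * N)) :
  unvec (map_mx f v) = map_mx f (unvec v).
Proof. by apply/matrixP => i t; rewrite !mxE. Qed.

Lemma kron_vec N T (A : 'M[R]_T) (B : 'M[R]_N) (Y : 'M[R]_(N, T)) :
  unvec (kron A B *m vec Y) = B *m Y *m A^T.
Proof.
apply/matrixP => i t; rewrite !mxE big_pair.
apply: eq_bigr => a _; rewrite !mxE mulr_suml; apply: eq_bigr => b _.
rewrite !mxE !hi_pair !lo_pair.
by rewrite [RHS]mulrC mulrA.
Qed.

Variable N : nat.
Variable P : 'M[R]_N.
Hypothesis HP : perm_matrix P.

Lemma col_unit i : exists j, forall j', P j' i = (j' == j)%:R.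
Proof.
case: HP => H01 [_ Hc].
have Hs : \sum_j P j i = 1.
  have := congr1 (fun M : 'cV[R]_N => M i 0) Hc; rewrite !mxE => <-.
  by apply: eq_bigr => j _; rewrite !mxE mulr1.
have nneg j : 0 <= P j i by case: (H01 j i) => ->; rewrite ?ler01.
case: (pickP (fun j => P j i == 1)) => [j /eqP Hj|Hn]; last first.
  exfalso; move: Hs; rewrite big1 => [|j _].
    by move/eqP; rewrite eq_sym oner_eq0.
  by case: (H01 j i) => // E; move: (Hn j); rewrite E eqxx.
exists j => j'.
case: eqP => [->|/eqP ne]; first by rewrite Hj.
move: Hs; rewrite (bigD1 j) //= Hj => /eqP; rewrite -subr_eq0 addrC addrK.
move/eqP/psumr_eq0P => H; apply: H => //.
Qed.

Lemma PtE i j (Hj : forall j', P j' i = (j' == j)%:R) T (Y : 'M[R]_(N, T)) t :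
  (P^T *m Y) i t = Y j t.
Proof.
rewrite !mxE (bigD1 j) //= big1 => [|k nk]; rewrite !mxE Hj.
  by rewrite eqxx mul1r addr0.
by rewrite (negbTE nk) mul0r.
Qed.

Lemma map_Pt (f : R -> R) T (Y : 'M[R]_(N, T)) :
  map_mx f (P^T *m Y) = P^T *m map_mx f Y.
Proof.
apply/matrixP => i t; have [j Hj] := col_unit i.
by rewrite mxE !(@PtE i j Hj) mxE.
Qed.

Lemma PPt : P *m P^T = 1%:M.
Proof.
case: HP => H01 [Hr _].
apply/matrixP => a b; rewrite !mxE.
transitivity (\sum_i P a i *+ (a == b)).
  apply: eq_bigr => i _; rewrite mxE; have [j Hj] := col_unit i.
  rewrite !Hj; case: (a =P b) => [->|/eqP ne]; first by rewrite -natrM mulnb andbb.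
  case: (a =P j) => [E|_]; last by rewrite mul0r.
  by rewrite -E eq_sym (negbTE ne) mulr0.
rewrite sumrMnl.
have := congr1 (fun M : 'cV[R]_N => M a 0) Hr; rewrite !mxE => Ha.
have -> : \sum_i P a i = 1.
  by rewrite -Ha; apply: eq_bigr => j _; rewrite !mxE mulr1.
done.
Qed.

Lemma PtP : P^T *m P = 1%:M.
Proof. exact: mulmx1C PPt. Qed.

Lemma conj_exp (S : 'M[R]_N) k : (P^T *m S *m P) ^+ k = P^T *m S ^+ k *m P.
Proof.
elim: k => [|k IH]; first by rewrite !expr0 -[1]/(1%:M : 'M[R]_N) mulmx1 PtP.
rewrite !exprS IH -!mulmxE.
rewrite -!mulmxA; congr (_ *m _); by rewrite (mulmxA P) PPt mul1mx.
Qed.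

Lemma filter_perm T Kb Kt (c : nat -> nat -> R) (S : 'M[R]_N) (ST : 'M[R]_T)
  (Y : 'M[R]_(N, T)) :
  unvec (gt_filter Kb Kt c (P^T *m S *m P) ST *m vec (P^T *m Y)) =
  P^T *m unvec (gt_filter Kb Kt c S ST *m vec Y).
Proof.
rewrite /gt_filter !mulmx_suml !unvec_sum mulmx_sumr; apply: eq_bigr => k _.
rewrite !mulmx_suml !unvec_sum mulmx_sumr; apply: eq_bigr => l _.
rewrite -!scalemxAl !unvecZ -scalemxAr !kron_vec conj_exp.
congr (_ *: _); rewrite -!mulmxA; congr (_ *m _); congr (_ *m _).
by rewrite !mulmxA PPt mul1mx.
Qed.

End Aux.

Theorem proposition2 (R : realType) (N T L F Kb Kt : nat)
  (h : nat -> nat -> nat -> nat -> nat -> R) (sigma : R -> R)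
  (S : 'M[R]_N) (ST : 'M[R]_T) (X : 'M[R]_(N, T)) (P : 'M[R]_N) :
  (1 <= L)%N ->
  perm_matrix P ->
  P^T *m unvec (gtcnn L F Kb Kt h sigma S ST (vec X)) =
  unvec (gtcnn L F Kb Kt h sigma (P^T *m S *m P) ST (vec (P^T *m X))).
Proof.
move=> _ HP; rewrite /gtcnn.
have key : forall ell f,
  P^T *m unvec (gtcnn_layer L F Kb Kt h sigma S ST (vec X) ell f) =
  unvec (gtcnn_layer L F Kb Kt h sigma (P^T *m S *m P) ST (vec (P^T *m X)) ell f).
  elim => [|ell IH] f /=; first by rewrite !unvec_vec.
  rewrite !unvec_map -(@map_Pt R N P HP); congr (map_mx _ _).
  rewrite !unvec_sum mulmx_sumr; apply: eq_bigr => g _.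
  rewrite -[gtcnn_layer _ _ _ _ _ _ (P^T *m S *m P) _ _ _ _]vec_unvec -IH.
  by rewrite filter_perm // vec_unvec.
exact: key.
Qed.
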